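(* Let $(G,\preceq)$ be a nontrivial left-ordered group whose Conradian soul is trivial. Then $\preceq$ is an accumulation point, in $\mathcal{LO}(G)$, of the set of its conjugates $\{\preceq_h: h\in G\}$.
   Context: A left-ordering is a total order invariant under left multiplication; it is Conradian if for all $f\succ id$, $g\succ id$ there is $n\in\mathbb{N}$ with $fg^n\succ g$. The Conradian soul of $(G,\preceq)$ is the maximal $\preceq$-convex subgroup (convex: $f_1\prec h\prec f_2$, $f_i$ in it, implies $h$ in it) on which $\preceq$ restricts to a Conradian ordering. The conjugate $\preceq_h$ is defined by $g\succ_h id$ iff $hgh^{-1}\succ id$. $\mathcal{LO}(G)$ is the space of left-orderings with the topology in which basic neighbourhoods of $\preceq$ are the sets of left-orderings agreeing with $\preceq$ on a given finite subset of $G$. *)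

(* Defs.v *)
From Stdlib Require Import List.
Set Implicit Arguments.

Record Group := {
  carrier :> Type;
  gmul : carrier -> carrier -> carrier;
  gone : carrier;
  ginv : carrier -> carrier;
  gmulA : forall a b c, gmul a (gmul b c) = gmul (gmul a b) c;
  gmul1l : forall a, gmul gone a = a;
  gmul1r : forall a, gmul a gone = a;
  gmulVl : forall a, gmul (ginv a) a = gone;
  gmulVr : forall a, gmul a (ginv a) = gone
}.

Section Defs.
Variable G : Group.
Local Notation "a * b" := (gmul G a b).
Local Notation one := (gone G).
Local Notation "a ^-1" := (ginv G a) (at level 3).

Fixpoint gpow (g : G) (n : nat) : G :=
  match n with O => one | S k => g * gpow g k end.

Definition left_ordering (le : G -> G -> Prop) : Prop :=
  (forall a, le a a) /\
  (forall a b, le a b -> le b a -> a = b) /\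
  (forall a b c, le a b -> le b c -> le a c) /\
  (forall a b, le a b \/ le b a) /\
  (forall a b c, le a b -> le (c * a) (c * b)).

Definition lt_of (le : G -> G -> Prop) (a b : G) : Prop := le a b /\ a <> b.

Definition subgroup (H : G -> Prop) : Prop :=
  H one /\ (forall a b, H a -> H b -> H (a * b)) /\ (forall a, H a -> H (a^-1)).

Definition convex (le : G -> G -> Prop) (H : G -> Prop) : Prop :=
  forall f1 h f2, H f1 -> H f2 -> lt_of le f1 h -> lt_of le h f2 -> H h.

Definition conradian_on (le : G -> G -> Prop) (H : G -> Prop) : Prop :=
  forall f g, H f -> H g -> lt_of le one f -> lt_of le one g ->
    exists n : nat, lt_of le g (f * gpow g (S n)).

Definition conradian_soul (le : G -> G -> Prop) (H : G -> Prop) : Prop :=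
  subgroup H /\ convex le H /\ conradian_on le H /\
  (forall K, subgroup K -> convex le K -> conradian_on le K ->
     forall x, K x -> H x).

(* The conjugate ordering le_h: positive cone {g | h g h^-1 > id};
   a <=_h b iff a = b or a^-1 b >_h id. *)
Definition conj_le (le : G -> G -> Prop) (h : G) (a b : G) : Prop :=
  a = b \/ lt_of le one (h * (a^-1 * b) * h^-1).

Definition agree_on (le1 le2 : G -> G -> Prop) (F : list G) : Prop :=
  forall a b, In a F -> In b F -> (le1 a b <-> le2 a b).

(* le is an accumulation point in LO(G) of {le_h : h in G}: every basic
   neighbourhood of le contains some le_h different from le. *)
Definition accumulation_of_conjugates (le : G -> G -> Prop) : Prop :=
  forall F : list G, exists h : G,
    agree_on le (conj_le le h) F /\
    exists a b : G, ~ (le a b <-> conj_le le h a b).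

End Defs.

Arguments gpow {G}.
Arguments left_ordering {G}.
Arguments lt_of {G}.
Arguments subgroup {G}.
Arguments convex {G}.
Arguments conradian_on {G}.
Arguments conradian_soul {G}.
Arguments conj_le {G}.
Arguments agree_on {G}.
Arguments accumulation_of_conjugates {G}.

(* Main.v *)
Require Import Defs.
From Stdlib Require Import List Classical.

Local Notation "a * b" := (gmul _ a b).
Local Notation "a ^-1" := (ginv _ a) (at level 3).

Lemma inv_uniq (G : Group) (a b : G) : a * b = gone G -> b = a^-1.
Proof.
  intro H. rewrite <- (gmul1l G b), <- (gmulVl G a), <- gmulA, H, gmul1r. reflexivity.
Qed.

Lemma inv_inv (G : Group) (a : G) : (a^-1)^-1 = a.
Proof. symmetry. apply inv_uniq. apply gmulVl. Qed.

Lemma inv_one (G : Group) : (gone G)^-1 = gone G.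
Proof. symmetry. apply inv_uniq. apply gmul1l. Qed.

Lemma inv_mul (G : Group) (a b : G) : (a * b)^-1 = b^-1 * a^-1.
Proof.
  symmetry. apply inv_uniq.
  rewrite <- gmulA, (gmulA G b), gmulVr, gmul1l, gmulVr. reflexivity.
Qed.

Lemma inv_conj (G : Group) (h k : G) : (h * k * h^-1)^-1 = h * k^-1 * h^-1.
Proof. rewrite !inv_mul, inv_inv, gmulA. reflexivity. Qed.

Lemma cancel_l (G : Group) (a b : G) : a^-1 * (a * b) = b.
Proof. rewrite gmulA, gmulVl, gmul1l. reflexivity. Qed.

Lemma cancel_l' (G : Group) (a b : G) : a * (a^-1 * b) = b.
Proof. rewrite gmulA, gmulVr, gmul1l. reflexivity. Qed.

Lemma mul_inj_l (G : Group) (a b c : G) : a * b = a * c -> b = c.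
Proof. intro H. rewrite <- (cancel_l G a b), H, cancel_l. reflexivity. Qed.

Lemma conj_one (G : Group) (h : G) : h * gone G * h^-1 = gone G.
Proof. rewrite gmul1r, gmulVr. reflexivity. Qed.

Section S.
Variable G : Group.
Variable le : G -> G -> Prop.
Hypothesis Hlo : left_ordering le.
Local Notation one := (gone G).
Definition pos (k : G) := lt_of le one k.
Definition good (h : G) := forall k, pos k <-> pos (h * k * h^-1).

Lemma le_refl a : le a a. Proof. apply Hlo. Qed.
Lemma le_anti a b : le a b -> le b a -> a = b. Proof. apply Hlo. Qed.
Lemma le_trans a b c : le a b -> le b c -> le a c. Proof. apply Hlo. Qed.
Lemma le_total a b : le a b \/ le b a. Proof. apply Hlo. Qed.
Lemma le_mul a b c : le a b -> le (c * a) (c * b). Proof. apply Hlo. Qed.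

Lemma lt_mul a b c : lt_of le a b -> lt_of le (c * a) (c * b).
Proof. intros [H1 H2]. split. now apply le_mul. intro E. apply H2. now apply mul_inj_l in E. Qed.

Lemma le_lt_trans a b c : le a b -> lt_of le b c -> lt_of le a c.
Proof. intros H [H1 H2]. split. eapply le_trans; eauto. intro E; subst. apply H2. now apply le_anti. Qed.
Lemma lt_le_trans a b c : lt_of le a b -> le b c -> lt_of le a c.
Proof. intros [H1 H2] H. split. eapply le_trans; eauto. intro E; subst. apply H2. now apply le_anti. Qed.

Lemma not_lt_le a b : ~ lt_of le a b -> le b a.
Proof. intro H. destruct (le_total a b) as [h|h]; auto.
  destruct (classic (a = b)) as [E|E]. subst; apply le_refl. exfalso; apply H; split; auto. Qed.

Lemma lt_not_le a b : lt_of le a b -> ~ le b a.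
Proof. intros [H1 H2] H. apply H2. now apply le_anti. Qed.

Lemma le_pos a b : le a b <-> a = b \/ pos (a^-1 * b).
Proof.
  split.
  - intro H. destruct (classic (a = b)) as [E|E]; [now left|right].
    split. rewrite <- (gmulVl G a). now apply le_mul.
    intro E'. apply E. rewrite <- (cancel_l' G a b), <- E', gmul1r. reflexivity.
  - intros [E|[H1 H2]]. subst; apply le_refl.
    apply (le_mul _ _ a) in H1. rewrite gmul1r, cancel_l' in H1. exact H1.
Qed.

Lemma pos_inv k : pos k -> lt_of le (k^-1) one.
Proof. intro H. apply (lt_mul _ _ (k^-1)) in H. rewrite gmul1r, gmulVl in H. exact H. Qed.

Lemma pos_inv' k : lt_of le k one -> pos (k^-1).
Proof. intro H. apply (lt_mul _ _ (k^-1)) in H. rewrite gmul1r, gmulVl in H. exact H. Qed.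

Lemma not_pos_both y : pos y -> pos (y^-1) -> False.
Proof. intros H1 H2. apply pos_inv in H1. destruct H1, H2. apply H0. now apply le_anti. Qed.

Lemma good_fwd h : (forall k, pos k -> pos (h * k * h^-1)) -> good h.
Proof.
  intros F k. split; [apply F|]. intro P.
  destruct (classic (pos k)) as [Pk|Pk]; auto. exfalso.
  destruct (classic (k = one)) as [E|E].
  { subst. rewrite conj_one in P. destruct P as [_ P]; now apply P. }
  assert (Hk : lt_of le k one). { split. now apply not_lt_le. auto. }
  apply (not_pos_both (h * k * h^-1)); auto. rewrite inv_conj. apply F. now apply pos_inv'.
Qed.

Lemma good_one : good one.
Proof. intro k. rewrite gmul1l, inv_one, gmul1r. tauto. Qed.

Lemma good_mul a b : good a -> good b -> good (a * b).
Proof.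
  intros Ha Hb k. rewrite (Hb k), (Ha (b * k * b^-1)).
  rewrite inv_mul, !gmulA. tauto.
Qed.

Lemma good_inv a : good a -> good (a^-1).
Proof.
  intros Ha k. rewrite (Ha (a^-1 * k * a^-1^-1)), inv_inv.
  rewrite !gmulA, gmulVr, gmul1l, <- gmulA, gmulVr, gmul1r. tauto.
Qed.

Definition bet (y z : G) := (le one z /\ le z y) \/ (le y z /\ le z one).
Definition C (y : G) := forall z, bet y z -> good z.

Lemma C_good x : C x -> good x.
Proof. intro H. apply H. destruct (le_total one x); [left|right]; split; auto using le_refl. Qed.

Lemma C_between u v z : (le u z /\ le z v) \/ (le v z /\ le z u) -> C u -> C v -> good z.
Proof.
  intros B Cu Cv. destruct (le_total one z) as [Z|Z].
  - destruct B as [[B1 B2]|[B1 B2]]; [apply Cv|apply Cu]; left; auto.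
  - destruct B as [[B1 B2]|[B1 B2]]; [apply Cu|apply Cv]; right; auto.
Qed.

Lemma bet_mul c y z : bet y z -> (le c (c * z) /\ le (c * z) (c * y)) \/ (le (c * y) (c * z) /\ le (c * z) c).
Proof.
  assert (A1 : forall w, le one w -> le c (c * w)).
  { intros w H. apply (le_mul _ _ c) in H. now rewrite gmul1r in H. }
  assert (A2 : forall w, le w one -> le (c * w) c).
  { intros w H. apply (le_mul _ _ c) in H. now rewrite gmul1r in H. }
  intros [[B1 B2]|[B1 B2]]; [left|right]; split; auto; apply le_mul; auto.
Qed.

Lemma C_inv x : C x -> C (x^-1).
Proof.
  intros Cx z B. pose proof (C_good x Cx) as Gx.
  apply (bet_mul x) in B. rewrite gmulVr in B.
  assert (Gxz : good (x * z)).
  { apply Cx. destruct B as [[B1 B2]|[B1 B2]]; [right|left]; auto. }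
  rewrite <- (cancel_l G x z). apply good_mul; auto. now apply good_inv.
Qed.

Lemma C_mul x y : C x -> C y -> C (x * y).
Proof.
  intros Cx Cy z B. pose proof (C_good x Cx) as Gx.
  apply (bet_mul (x^-1)) in B. rewrite cancel_l in B.
  rewrite <- (cancel_l' G x z). apply good_mul; auto.
  apply (C_between (x^-1) y); auto. now apply C_inv.
Qed.

Lemma C_one : C one.
Proof. intros z [[B1 B2]|[B1 B2]]; rewrite (le_anti _ _ B1 B2) || rewrite (le_anti _ _ B2 B1); apply good_one. Qed.

Lemma C_subgroup : subgroup C.
Proof. split; [apply C_one|split]; [apply C_mul|apply C_inv]. Qed.

Lemma C_convex : convex le C.
Proof.
  intros f1 h f2 C1 C2 [L1 _] [L2 _] z [[B1 B2]|[B1 B2]].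
  - apply C2. left. split; auto. eapply le_trans; eauto.
  - apply C1. right. split; auto. eapply le_trans; eauto.
Qed.

Lemma C_conradian : conradian_on le C.
Proof.
  intros f k Cf Ck Pf Pk. exists 0. simpl. rewrite gmul1r.
  pose proof (good_inv _ (C_good k Ck)) as Gk.
  apply Gk in Pf. rewrite inv_inv in Pf.
  apply (lt_mul _ _ k) in Pf. rewrite gmul1r, <- gmulA, cancel_l' in Pf. exact Pf.
Qed.

Lemma no_good_interval :
  conradian_soul le (fun x : G => x = one) ->
  forall t, pos t -> (forall x, le one x -> le x t -> good x) -> False.
Proof.
  intros [_ [_ [_ Max]]] t Pt Ht.
  assert (Ct : C t).
  { intros z [[B1 B2]|[B1 B2]]. now apply Ht.
    assert (z = one). { apply le_anti; auto. eapply le_trans; [apply Pt|]. auto. }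
    subst. apply good_one. }
  pose proof (Max C C_subgroup C_convex C_conradian t Ct). destruct Pt as [_ Pt]. auto.
Qed.

Lemma min_exists (L : list G) g0 : pos g0 ->
  exists g, pos g /\ forall d, In d L -> pos d -> le g d.
Proof.
  intro P0. induction L as [|d L [g [Pg Hg]]].
  - exists g0. split; auto. intros d [].
  - destruct (classic (pos d)) as [Pd|Pd].
    + destruct (le_total g d) as [E|E].
      * exists g. split; auto. intros d' [<-|I] P; auto.
      * exists d. split; auto. intros d' [<-|I] P. apply le_refl. eapply le_trans; eauto.
    + exists g. split; auto. intros d' [<-|I] P; [contradiction|auto].
Qed.

Lemma agree_lemma (F : list G) h :
  (forall d, In d (flat_map (fun a => map (fun b => a^-1 * b) F) F) -> pos d -> pos (h * d * h^-1)) ->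
  agree_on le (conj_le le h) F.
Proof.
  intros H a b Ia Ib. unfold conj_le. rewrite le_pos.
  assert (I : forall a b, In a F -> In b F -> In (a^-1 * b) (flat_map (fun a => map (fun b => a^-1 * b) F) F)).
  { intros a' b' Ia' Ib'. apply in_flat_map. exists a'. split; auto. apply in_map. auto. }
  destruct (classic (a = b)) as [E|E]. { subst; tauto. }
  destruct (classic (pos (a^-1 * b))) as [P|P].
  - split; intros _; right; [apply H; auto|exact P].
  - split; intros [X|X]; try contradiction. exfalso.
    assert (Nd : lt_of le (a^-1 * b) one).
    { split. now apply not_lt_le. intro E'. apply E. rewrite <- (cancel_l' G a b), E', gmul1r. reflexivity. }
    apply pos_inv' in Nd. rewrite inv_mul, inv_inv in Nd.
    apply H in Nd; [|apply I; auto].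
    assert (Eq : b^-1 * a = (a^-1 * b)^-1) by (rewrite inv_mul, inv_inv; reflexivity).
    rewrite Eq, <- inv_conj in Nd. exact (not_pos_both _ X Nd).
Qed.

Lemma diff_lemma h : ~ good h -> exists a b, ~ (le a b <-> conj_le le h a b).
Proof.
  intro N. apply not_all_ex_not in N. destruct N as [k N].
  exists one, k. unfold conj_le. rewrite le_pos, inv_one, gmul1l. intro E. apply N.
  destruct (classic (one = k)) as [Ek|Ek].
  - subst. rewrite conj_one. tauto.
  - split; intro X; [destruct (proj1 E (or_intror X)) | destruct (proj2 E (or_intror X))]; tauto.
Qed.
End S.

Theorem mainTheorem8 (G : Group) (le : G -> G -> Prop) :
  left_ordering le ->
  (exists g : G, g <> gone G) ->
  conradian_soul le (fun x : G => x = gone G) ->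
  accumulation_of_conjugates le.
Proof.
  intros Hlo [g1 Hg1] Soul F.
  assert (P0 : exists g0, pos _ le g0).
  { destruct (le_total _ _ Hlo (gone G) g1) as [E|E].
    - exists g1. split; auto.
    - exists (g1^-1). apply pos_inv'; auto. split; auto. }
  destruct P0 as [g0 P0].
  destruct (min_exists _ _ Hlo (flat_map (fun a => map (fun b => a^-1 * b) F) F) g0 P0) as [g [Pg Hg]].
  destruct (classic (exists x, le (gone G) x /\ lt_of le x g /\ ~ good _ le (x^-1))) as [[x [X1 [X2 X3]]]|NX].
  - exists (x^-1). split.
    + apply agree_lemma; auto. intros d Id Pd. rewrite inv_inv.
      assert (lt_of le x (d * x)).
      { eapply (lt_le_trans _ _ Hlo); [exact X2|]. eapply (le_trans _ _ Hlo); [apply (Hg d Id Pd)|].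
        apply (le_mul _ _ Hlo _ _ d) in X1. now rewrite gmul1r in X1. }
      apply (lt_mul _ _ Hlo _ _ (x^-1)) in H. rewrite gmulVl, gmulA in H. exact H.
    + apply diff_lemma; auto.
  - exfalso.
    assert (GX : forall x, le (gone G) x -> lt_of le x g -> good _ le x).
    { intros x X1 X2. rewrite <- (inv_inv G x). apply good_inv; auto.
      apply NNPP. intro N. apply NX. eauto. }
    destruct (classic (exists t, pos _ le t /\ lt_of le t g)) as [[t [Pt Tg]]|NT].
    + apply (no_good_interval _ _ Hlo Soul t Pt). intros x X1 X2. apply GX; auto.
      eapply (le_lt_trans _ _ Hlo); eauto.
    + apply (no_good_interval _ _ Hlo Soul g Pg). intros x X1 X2.
      destruct (classic (x = g)) as [->|Ex]; [|apply GX; auto; split; auto].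
      rewrite <- (inv_inv G g). apply good_inv; auto. apply good_fwd; auto.
      intros k Pk. rewrite inv_inv. apply NNPP. intro N.
      apply not_lt_le in N; auto.
      apply (le_mul _ _ Hlo _ _ g) in N. rewrite gmul1r, !gmulA, gmulVr, gmul1l in N.
      assert (kg_ne : g * (g^-1 * k * g) <> g).
      { rewrite !gmulA, gmulVr, gmul1l. intro E. destruct Pk as [_ Pk]. apply Pk.
        rewrite <- (gmul1l G g) in E at 2. apply (f_equal (fun u => u * g^-1)) in E.
        rewrite <- !gmulA, gmulVr, !gmul1r in E. auto. }
      rewrite !gmulA, gmulVr, gmul1l in kg_ne.
      destruct (classic (pos _ le (k * g))) as [Pkg|Pkg].
      * apply NT. exists (k * g). split; auto. split; auto.
      * apply not_lt_le in Pkg; auto.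
        apply (le_mul _ _ Hlo _ _ (k^-1)) in Pkg. rewrite cancel_l, gmul1r in Pkg.
        apply pos_inv in Pk; auto. destruct Pk as [Pk1 _].
        destruct Pg as [Pg1 Pg2]. apply Pg2. apply (le_anti _ _ Hlo); auto.
        eapply (le_trans _ _ Hlo); eauto.
Qed.
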